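(* The Lemke--Howson algorithm solves nondegenerate instances of the tropical Nash equilibrium complementarity problem (TNECP) within at most $2n-1$ iterations, where $n$ is the number of rows of the system.
   Context: Over the max-plus semifield $\mathbb{T}=\mathbb{R}\cup\{-\infty\}$ ($\oplus=\max$, $\odot=+$), TNECP asks, given an $n\times n$ matrix $M^-$ with no all-$(-\infty)$ column and $q^+\in\mathbb{T}^n$ with no $-\infty$ entry, for $(w,z)\in\mathbb{T}^n\times\mathbb{T}^n$ with $w\oplus M^-\odot z=q^+$, $w^\top\odot z=-\infty$, $z\neq-\infty$. The instance is nondegenerate if for each $j\in[n]$ the minimum $\min_k (q^+_k - M^-_{kj})$ is attained exactly once. Write the system as $A\odot x=b$ with $A=(I\ M^-)$ (tropical identity), columns indexed by $[n]\uplus[n]$ (blue copy for $w$, red copy for $z$; two elements are twins if same label, different colors). A tropical basis of $A\odot x=b$ ($A\in\mathbb{T}^{n\times d}$) is $B\subset[d]$ of size $n$ with a bijection $\phi:[n]\to B$ such that for each $i$, $b_i - A_{i\phi(i)}\in\mathbb{T}$ is minimal among $b_k-A_{k\phi(i)}$, $k\in[n]$. In the nondegenerate case, for a basis $B$ and $j\notin B$ there is a unique other basis contained in $B\cup\{j\}$. Fix $j^\star\in[n]$. The Lemke--Howson algorithm starts with $B=[n]\uplus\varnothing$ and entering element $\gamma=(j^\star,\text{red})$, and repeatedly: replaces $B$ by the unique basis $B'\subset B\cup\{\gamma\}$ distinct from $B$, sets $\gamma$ to the twin of the element of $B\setminus B'$, and stops when $B$ is fully labeled (all labels in $[n]$ appear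 in $B$). *)

(* Defs.v *)
(* Tropical (max-plus) semifield T = R u {-oo} is modelled
   as [option R] with [None] = -oo, for an arbitrary real field R. *)
From HB Require Import structures.
From mathcomp Require Import all_boot all_order all_algebra.
Set Implicit Arguments. Unset Strict Implicit. Unset Printing Implicit Defensive.
Import Order.TTheory GRing.Theory Num.Theory.
Local Open Scope ring_scope.

Section Tropical.
Variable R : realFieldType.

Definition tadd (x y : option R) : option R :=
  match x, y with
  | None, _ => y
  | _, None => x
  | Some a, Some b => Some (Num.max a b)
  end.

Definition tmul (x y : option R) : option R :=
  match x, y with
  | Some a, Some b => Some (a + b)
  | _, _ => None
  end.

(* ordinary minimum on R u {+oo}, here None = +oo (used only for the
   "ratios" b_k - A_kj, which are +oo when A_kj = -oo) *)
Definition pmin (x y : option R) : option R :=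
  match x, y with
  | None, _ => y
  | _, None => x
  | Some a, Some b => Some (Num.min a b)
  end.

Variable n : nat.

(* Column indices [n] (+) [n] : inl j = blue copy (w), inr j = red copy (z). *)
Definition elt := ('I_n + 'I_n)%type.

Definition label (e : elt) : 'I_n := match e with inl j => j | inr j => j end.

Definition twin (e : elt) : elt := match e with inl j => inr j | inr j => inl j end.

(* the matrix A = (I  M^-) with I the tropical identity *)
Definition colA (M : 'M[option R]_n) (e : elt) (k : 'I_n) : option R :=
  match e with
  | inl j => if k == j then Some 0 else None
  | inr j => M k j
  end.

(* b_k - A_ke in R u {+oo} (None = +oo) *)
Definition ratio (M : 'M[option R]_n) (q : 'I_n -> R) (e : elt) (k : 'I_n)
  : option R :=
  match colA M e k with Some c => Some (q k - c) | None => None end.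

Definition tight (M : 'M[option R]_n) (q : 'I_n -> R) (i : 'I_n) (e : elt)
  : bool :=
  match colA M e i with
  | Some a => [forall k : 'I_n,
                 match colA M e k with
                 | Some c => q i - a <= q k - c
                 | None => true
                 end]
  | None => false
  end.

Definition is_basis (M : 'M[option R]_n) (q : 'I_n -> R) (B : {set elt}) : bool :=
  (#|B| == n) &&
  [exists phi : {ffun 'I_n -> elt},
     injectiveb phi && [forall i : 'I_n, (phi i \in B) && tight M q i (phi i)]].

Definition fully_labeled (B : {set elt}) : bool :=
  [forall i : 'I_n, (inl i \in B) || (inr i \in B)].

(* state of Lemke--Howson: current basis and entering element *)
Definition lh_state := ({set elt} * elt)%type.

Definition lh_start (jstar : 'I_n) : lh_state := ([set inl i | i : 'I_n], inr jstar).

(* one iteration: B' := the (unique, under nondegeneracy) basis contained in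
   B u {gamma} distinct from B; gamma := twin of the element of B \ B'. *)
Definition lh_step (M : 'M[option R]_n) (q : 'I_n -> R) (s : lh_state)
  : option lh_state :=
  let: (B, g) := s in
  match [pick B' : {set elt} | is_basis M q B' && (B' \subset g |: B) && (B' != B)] with
  | Some B' =>
      match [pick e in B :\: B'] with
      | Some e => Some (B', twin e)
      | None => None
      end
  | None => None
  end.

Fixpoint lh_run (M : 'M[option R]_n) (q : 'I_n -> R) (jstar : 'I_n) (t : nat)
  : option lh_state :=
  match t with
  | 0 => Some (lh_start jstar)
  | t'.+1 => obind (lh_step M q) (lh_run M q jstar t')
  end.

Definition basic_point (M : 'M[option R]_n) (q : 'I_n -> R) (B : {set elt})
  (e : elt) : option R :=
  if e \in B then \big[pmin/None]_(k < n) ratio M q e k else None.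

Definition tnecp_solution (M : 'M[option R]_n) (q : 'I_n -> R)
  (w z : 'I_n -> option R) : Prop :=
  (forall k : 'I_n,
      tadd (w k) (\big[tadd/None]_(j < n) tmul (M k j) (z j)) = Some (q k))
  /\ \big[tadd/None]_(k < n) tmul (w k) (z k) = None
  /\ (exists k : 'I_n, z k != None).

Definition tnecp_nondegenerate (M : 'M[option R]_n) (q : 'I_n -> R) : Prop :=
  forall j : 'I_n, exists k0 : 'I_n, exists c0 : R,
    M k0 j = Some c0 /\
    forall (k : 'I_n) (c : R), M k j = Some c -> k != k0 -> q k0 - c0 < q k - c.

Definition no_minf_column (M : 'M[option R]_n) : Prop :=
  forall j : 'I_n, exists k : 'I_n, M k j != None.

End Tropical.

(* Main.v *)
Require Import Defs.
Set Implicit Arguments. Unset Strict Implicit. Unset Printing Implicit Defensive.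
From HB Require Import structures.
From mathcomp Require Import all_boot all_order all_algebra.
From mathcomp Require Import zify lra.
Import Order.TTheory GRing.Theory Num.Theory.
Local Open Scope ring_scope.

Section Gen.
Variable R : realFieldType.

Lemma big_pmin_seq (I : eqType) (r : seq I) (F : I -> option R) (v : R) (i0 : I) :
  F i0 = Some v -> (forall i x, F i = Some x -> v <= x) ->
  (i0 \in r -> \big[@pmin R/None]_(i <- r) F i = Some v) /\
  (\big[@pmin R/None]_(i <- r) F i = None \/
   exists2 x, \big[@pmin R/None]_(i <- r) F i = Some x & v <= x).
Proof.
move=> Fi0 Fge; elim: r => [|a r [IH1 IH2]]; rewrite ?big_nil ?big_cons.
  by split=> //; left.
have Ha : F a = None \/ exists2 x, F a = Some x & v <= x.
  by case E: (F a) => [x|]; [right; exists x => //; exact: Fge E|left].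
split.
  rewrite in_cons => /orP [/eqP <-|/IH1 ->].
    by rewrite Fi0; case: IH2 => [->|[x -> vx]] //=; rewrite min_l.
  by case: Ha => [->|[x -> vx]] //=; rewrite min_r.
case: Ha => [->|[x -> vx]] /=; first by [].
case: IH2 => [->|[y -> vy]] /=; right; first by exists x.
by exists (Order.min x y) => //; rewrite le_min vx vy.
Qed.

Lemma big_pmin_eq (I : finType) (F : I -> option R) (v : R) (i0 : I) :
  F i0 = Some v -> (forall i x, F i = Some x -> v <= x) ->
  \big[@pmin R/None]_(i : I) F i = Some v.
Proof.
by move=> H1 H2; have [-> //] := @big_pmin_seq _ (index_enum I) F v i0 H1 H2; rewrite mem_index_enum.
Qed.

Lemma big_tadd_seq (I : eqType) (r : seq I) (F : I -> option R) (v : R) :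
  (forall i x, F i = Some x -> x <= v) ->
  (\big[@tadd R/None]_(i <- r) F i = None \/
   exists2 x, \big[@tadd R/None]_(i <- r) F i = Some x & x <= v).
Proof.
move=> Fle; elim: r => [|a r IH]; rewrite ?big_nil ?big_cons; first by left.
case E: (F a) => [x|] /=; last by [].
have xv := Fle _ _ E.
case: IH => [->|[y -> yv]] /=; right; first by exists x.
by exists (Order.max x y) => //; rewrite ge_max xv yv.
Qed.

Lemma big_tadd_none (I : finType) (F : I -> option R) :
  (forall i, F i = None) -> \big[@tadd R/None]_(i : I) F i = None.
Proof.
move=> H; elim: (index_enum I) => [|a r IH]; rewrite ?big_nil ?big_cons //.
by rewrite H IH.
Qed.

Lemma tadd_le (a : R) (y : option R) : (y = None \/ exists2 x, y = Some x & x <= a) ->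
  tadd (Some a) y = Some a.
Proof.
by case=> [->|[x -> xa]] //=; rewrite max_l.
Qed.

Lemma big_tadd_eq (I : finType) (F : I -> option R) (v : R) (i0 : I) :
  F i0 = Some v -> (forall i x, F i = Some x -> x <= v) ->
  \big[@tadd R/None]_(i : I) F i = Some v.
Proof.
move=> H1 H2; have : i0 \in index_enum I by rewrite mem_index_enum.
elim: (index_enum I) => [|a r IH] //; rewrite big_cons in_cons => /orP [/eqP <-|/IH ->].
  by rewrite H1; apply: tadd_le; exact: big_tadd_seq.
by case E: (F a) => [x|] //=; rewrite max_r // (H2 _ _ E).
Qed.
End Gen.
Section Basis.
Variable R : realFieldType.
Variable n : nat.
Variable M : 'M[option R]_n.
Variable q : 'I_n -> R.
Hypothesis nd : tnecp_nondegenerate M q.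

Lemma tight_ex (e : elt n) : exists i, tight M q i e.
Proof.
case: e => [j|j].
  exists j; rewrite /tight /= eqxx; apply/forallP => k.
  by case: ifP => // /eqP ->.
have [k0 [c0 [H0 Hs]]] := nd j.
exists k0; rewrite /tight; have -> : colA M (inr j) k0 = Some c0 by exact: H0.
apply/forallP => k /=.
case E: (M k j) => [c|] //; have [ek|ne] := eqVneq k k0; last exact: ltW (Hs _ _ E ne).
by move: E; rewrite ek H0 => -[->].
Qed.

Lemma tight_inj (e : elt n) i i' : tight M q i e -> tight M q i' e -> i = i'.
Proof.
case: e => [j|j]; rewrite /tight /=.
  by case: eqP => // -> _; case: eqP.
have [k0 [c0 [H0 Hs]]] := nd j.
suff H : forall i, tight M q i (inr j) -> i = k0.
  by move=> /H -> /H ->.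
move=> {}i; rewrite /tight /=.
case E: (M i j) => [a|] // /forallP /(_ k0); rewrite H0 => le.
apply/eqP; apply: contraTT le => ne; rewrite -ltNge.
exact: Hs _ _ E ne.
Qed.

Definition rr (e : elt n) : 'I_n := odflt (label e) [pick i | tight M q i e].

Lemma tightE e i : tight M q i e = (i == rr e).
Proof.
rewrite /rr; case: pickP => [j Hj|H] /=.
  by apply/idP/eqP => [Hi|->//]; exact: tight_inj Hi Hj.
by have [k Hk] := tight_ex e; move: (H k); rewrite Hk.
Qed.

Lemma rr_tight e : tight M q (rr e) e.
Proof. by rewrite tightE. Qed.

Lemma rr_inl i : rr (inl i) = i.
Proof.
apply/esym/eqP; rewrite -tightE /tight /= eqxx; apply/forallP => k.
by case: ifP => // /eqP ->.
Qed.

Lemma tight_red j : exists a, M (rr (inr j)) j = Some a /\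
  forall k c, M k j = Some c -> q (rr (inr j)) - a <= q k - c.
Proof.
have := rr_tight (inr j); rewrite /tight /=.
case: (M _ j) => [a|] // /forallP H; exists a; split => // k c E.
by have := H k; rewrite /= E.
Qed.

Definition cover (B : {set elt n}) :=
  {in B &, injective rr} /\ forall i, exists2 e, e \in B & rr e = i.

Lemma basisP B : is_basis M q B <-> cover B.
Proof.
split.
  case/andP => /eqP cB /existsP [phi /andP [/injectiveP inj /forallP H]].
  have Hp i : phi i \in B /\ rr (phi i) = i.
    by have /andP [-> t] := H i; split => //; apply/esym/eqP; rewrite -tightE.
  have EB : B = phi @: [set: 'I_n].
    apply/esym/eqP; rewrite eqEcard; apply/andP; split.
      by apply/subsetP => x /imsetP [i _ ->]; case: (Hp i).
    by rewrite cB card_imset // cardsT card_ord.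
  split.
    move=> x y; rewrite EB => /imsetP [i _ ->] /imsetP [j _ ->].
    by case: (Hp i) => _ ->; case: (Hp j) => _ -> ->.
  by move=> i; exists (phi i); case: (Hp i).
case=> inj cov.
have cB : #|B| = n.
  rewrite -(card_in_imset inj).
  suff -> : rr @: B = [set: 'I_n] by rewrite cardsT card_ord.
  apply/setP => i; rewrite inE; have [e eB <-] := cov i; exact: imset_f.
apply/andP; split; first by rewrite cB.
pose phi := [ffun i => odflt (inl i) [pick e in B | rr e == i]].
have Hp i : phi i \in B /\ rr (phi i) = i.
  rewrite /phi ffunE; case: pickP => [e /andP [eB /eqP <-]|H] //=.
  by have [e eB ei] := cov i; move: (H e); rewrite eB ei eqxx.
apply/existsP; exists phi; apply/andP; split.
  by apply/injectiveP => i j E; case: (Hp i) => _ <-; case: (Hp j) => _ <-; rewrite E.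
apply/forallP => i; case: (Hp i) => -> ri /=; by rewrite tightE ri.
Qed.

Lemma basis_card B : is_basis M q B -> #|B| = n.
Proof. by case/andP => /eqP. Qed.

Lemma stepE B g e : is_basis M q B -> g \notin B -> e \in B -> rr e = rr g ->
  lh_step M q (B, g) = Some (g |: (B :\ e), twin e).
Proof.
move=> bB gB eB ree.
have [inj cov] := (basisP B).1 bB.
have eg : e != g by apply: contraNneq gB => <-.
have cN : #|g |: (B :\ e)| = n.
  rewrite cardsU1 in_setD1 (negbTE gB) andbF /= add1n.
  by rewrite -[RHS](basis_card bB) (cardsD1 e B) eB.
have bN : is_basis M q (g |: (B :\ e)).
  apply/basisP; split.
    have key x : x \in B :\ e -> rr x != rr g.
      rewrite in_setD1 => /andP [xe xB]; rewrite -ree; apply: contra xe => /eqP E.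
      by apply/eqP; apply: inj.
    move=> x y; rewrite !in_setU1 => /orP [/eqP ->|xB] /orP [/eqP ->|yB] //.
    - by move=> E; have := key _ yB; rewrite E eqxx.
    - by move=> E; have := key _ xB; rewrite E eqxx.
    by move: xB yB; rewrite !in_setD1 => /andP [_ xB] /andP [_ yB]; apply: inj.
  move=> i; have [x xB <-] := cov i; have [->|xe] := eqVneq x e.
    by exists g; rewrite ?setU11.
  by exists x => //; rewrite in_setU1 in_setD1 xe xB orbT.
rewrite /lh_step; case: pickP => [B' /andP [/andP [bB' sub] neq]|none]; last first.
  have := none (g |: (B :\ e)); rewrite bN /=.
  rewrite setUS ?subD1set //=.
  suff -> : (g |: (B :\ e) != B) by [].
  by apply: contraNneq gB => <-; rewrite setU11.
have [inj' _] := (basisP B').1 bB'.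
have gB' : g \in B'.
  apply: contraNT neq => gB'; rewrite eqEcard (basis_card bB') (basis_card bB) leqnn andbT.
  apply/subsetP => x xB'; have := subsetP sub x xB'; rewrite in_setU1 => /orP [/eqP E|//].
  by move: gB'; rewrite -E xB'.
have eB' : e \notin B'.
  apply: contra eg => eB'; apply/eqP; exact: inj'.
have EB' : B' = g |: (B :\ e).
  apply/eqP; rewrite eqEcard cN (basis_card bB') leqnn andbT.
  apply/subsetP => x xB'; rewrite in_setU1 in_setD1.
  have := subsetP sub x xB'; rewrite in_setU1 => /orP [->//|xB].
  by rewrite xB andbT orbC; apply/orP; left; apply: contraNneq eB' => <-.
subst B'.
case: pickP => [x|none].
  move=> /setDP [xB]; rewrite in_setU1 in_setD1 xB andbT => /norP [_ /negbNE /eqP ->] //.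
by have := none e; rewrite in_setD eB in_setU1 in_setD1 eqxx (negbTE eg).
Qed.

Lemma run_basis jstar t B g : lh_run M q jstar t = Some (B, g) -> is_basis M q B.
Proof.
elim: t B g => [|t IH] B g /=.
  case=> <- _; apply/basisP; split.
    by move=> x y /imsetP [i _ ->] /imsetP [j _ ->]; rewrite !rr_inl => ->.
  by move=> i; exists (inl i); rewrite ?rr_inl ?imset_f.
case: (lh_run M q jstar t) (IH) => [[B0 g0]|] //= _.
rewrite /lh_step; case: pickP => [B' /andP [/andP [ok _] _]|_] //.
by case: pickP => // x _ [<- _].
Qed.

Lemma bp_inl B i : basic_point M q B (inl i) = if inl i \in B then Some (q i) else None.
Proof.
rewrite /basic_point; case: ifP => // _.
apply: (@big_pmin_eq _ _ _ _ (i)); first by rewrite /Defs.ratio /= eqxx subr0.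
by move=> k x; rewrite /Defs.ratio /=; case: eqP => [->|] //= [<-]; rewrite subr0.
Qed.

Lemma tnecp_ok B : is_basis M q B -> fully_labeled B -> (exists j, inr j \in B) ->
  tnecp_solution M q (fun i => basic_point M q B (inl i))
                     (fun i => basic_point M q B (inr i)).
Proof.
move=> bB fl ex.
have [inj cov] := (basisP B).1 bB.
have bpr j : inr j \in B -> exists a, M (rr (inr j)) j = Some a /\
    basic_point M q B (inr j) = Some (q (rr (inr j)) - a) /\
    forall k c, M k j = Some c -> q (rr (inr j)) - a <= q k - c.
  move=> jB; have [a [Ha Hmin]] := tight_red j; exists a; split => //; split => //.
  rewrite /basic_point jB; apply: (@big_pmin_eq _ _ _ _ (rr (inr j))).
    by rewrite /Defs.ratio /= Ha.
  by move=> k x; rewrite /Defs.ratio /=; case E: (M k j) => [c|] // [<-]; exact: Hmin.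
have bpn j : inr j \notin B -> basic_point M q B (inr j) = None.
  by rewrite /basic_point => /negbTE ->.
have terms k j x : tmul (M k j) (basic_point M q B (inr j)) = Some x -> x <= q k.
  case: (boolP (inr j \in B)) => [jB|/bpn ->]; last by case: (M k j).
  have [a [_ [-> Hmin]]] := bpr j jB.
  case E: (M k j) => [c|] //= [<-]; have := Hmin k c E; lra.
split.
  move=> k; have [e eB ek] := cov k.
  case: e eB ek => [i|j] eB ek.
    rewrite rr_inl in ek; subst i; rewrite bp_inl eB; apply: tadd_le.
    exact: big_tadd_seq (terms k).
  have kB : inl k \notin B.
    by apply/negP => kB; have := inj _ _ kB eB; rewrite rr_inl ek => /(_ erefl).
  rewrite bp_inl (negbTE kB) /=.
  apply: (@big_tadd_eq _ _ _ _ j); last exact: terms.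
  have [a [Ha [-> _]]] := bpr j eB.
  by rewrite -ek Ha /= addrC subrK.
split.
  have lab : {in B &, injective (@label n)}.
    apply/imset_injP; rewrite (basis_card bB).
    have -> : (@label n) @: B = [set: 'I_n].
      apply/setP => i; rewrite inE; have /forallP/(_ i)/orP [H|H] := fl; apply/imsetP.
        by exists (inl i).
      by exists (inr i).
    by rewrite cardsT card_ord.
  apply: big_tadd_none => k; rewrite bp_inl.
  case: ifP => // kB; case: (boolP (inr k \in B)) => [kB'|/bpn ->] //.
  by have := lab _ _ kB kB' erefl.
have [j jB] := ex; exists j; have [a [_ [-> _]]] := bpr j jB; done.
Qed.
End Basis.

Section Run.
Variable R : realFieldType.
Variable n : nat.
Variable M : 'M[option R]_n.
Variable q : 'I_n -> R.
Hypothesis nd : tnecp_nondegenerate M q.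
Variable jstar : 'I_n.

Local Open Scope nat_scope.

Definition ss t := iter t (fun j => rr M q (inr j)) jstar.

Lemma ssS t : rr M q (inr (ss t)) = ss t.+1.
Proof. by []. Qed.

Definition inS lo hi j := has (fun b => ss b == j) (iota lo (hi - lo)).

Arguments inS : simpl never.

Lemma eqLL (i j : 'I_n) : (inl i == inl j :> elt n) = (i == j). Proof. by []. Qed.
Lemma eqRR (i j : 'I_n) : (inr i == inr j :> elt n) = (i == j). Proof. by []. Qed.
Lemma eqLR (i j : 'I_n) : (inl i == inr j :> elt n) = false. Proof. by []. Qed.
Lemma eqRL (i j : 'I_n) : (inr i == inl j :> elt n) = false. Proof. by []. Qed.
Arguments ss : simpl never.

Lemma inSP lo hi j : reflect (exists2 b, lo <= b < hi & ss b = j) (inS lo hi j).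
Proof.
apply: (iffP hasP) => [[b]|[b hb <-]]; rewrite ?mem_iota.
  by move=> hb /eqP <-; exists b => //; lia.
by exists b => //; rewrite mem_iota; lia.
Qed.

Variable K : nat.
Hypothesis sinj : forall a b, a < K -> b < K -> ss a = ss b -> a = b.

Lemma inS_s lo hi b : hi <= K -> b < K -> inS lo hi (ss b) = (lo <= b < hi).
Proof.
move=> hK bK; apply/inSP/idP => [[b' hb' E]|hb]; last by exists b.
by have := @sinj b' b ltac:(lia) bK E => <-.
Qed.

Lemma inS_out lo hi i : hi <= K -> (forall b, b < K -> ss b != i) -> inS lo hi i = false.
Proof.
move=> hK H; apply/inSP => -[b hb E]; have := H b ltac:(lia); by rewrite E eqxx.
Qed.

Lemma s_dec i : (exists2 b, b < K & i = ss b) \/ (forall b, b < K -> ss b != i).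
Proof.
case: (boolP (inS 0 K i)) => [/inSP [b hb <-]|H]; first by left; exists b.
by right => b bK; apply: contraNneq H => <-; apply/inSP; exists b.
Qed.

Lemma eq_s a b : a < K -> b < K -> (ss a == ss b) = (a == b).
Proof. by move=> aK bK; apply/eqP/eqP => [/sinj|->]; [apply|]. Qed.

Definition B1 t : {set elt n} :=
  [set e | match e with inl i => ~~ inS 1 t.+1 i | inr j => inS 0 t j end].

Lemma phase1 t : t < K -> lh_run M q jstar t = Some (B1 t, inr (ss t)).
Proof.
elim: t => [|t IH] tK.
  rewrite /= /lh_start; congr (Some (_, _)); apply/setP => -[i|j]; rewrite !inE /inS /=.
    by apply/imsetP; exists i.
  by apply/imsetP => -[x].
have IH' := IH (ltnW tK).
have -> : lh_run M q jstar t.+1 = lh_step M q (B1 t, inr (ss t)) by rewrite /= IH'.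
have bB := run_basis nd IH'.
have gB : inr (ss t) \notin B1 t by rewrite inE /= inS_s //; lia.
have eB : inl (ss t.+1) \in B1 t by rewrite inE /= inS_s //; lia.
rewrite (stepE nd bB gB eB) ?rr_inl //=; congr (Some (_, _)).
have tK1 : t.+1 <= K by lia.
have tK0 : t <= K by lia.
apply/setP => -[i|j]; rewrite !inE /=.
  case: (s_dec i) => [[b bK ->]|H].
    by rewrite !inS_s ?eqLL ?eqRR ?eq_s //; lia.
  by rewrite !inS_out // ?eqLL eq_sym (negbTE (H _ tK)).
case: (s_dec j) => [[b bK ->]|H].
  by rewrite !inS_s ?eqLL ?eqRR ?eq_s //; lia.
by rewrite !inS_out // ?eqRR eq_sym (negbTE (H _ tK1)).
Qed.

Lemma nfl1 t : 0 < t < K -> ~~ fully_labeled (B1 t).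
Proof.
move=> tK; apply/forallPn; exists (ss t); rewrite !inE /= !inS_s //; lia.
Qed.


Definition Bf0 : {set elt n} :=
  [set e | match e with inl i => ~~ inS 0 K i | inr j => inS 0 K j end].

Lemma fl_Bf0 : fully_labeled Bf0.
Proof. by apply/forallP => i; rewrite !inE /=; case: (inS 0 K i). Qed.

Lemma phase1_last : 0 < K -> ss K = ss 0 -> lh_run M q jstar K = Some (Bf0, inr (ss K)).
Proof.
move=> K0 HK; have [K' EK] : exists K', K = K'.+1 by exists K.-1; lia.
have IH' := phase1 (ltac:(lia) : K' < K).
have -> : lh_run M q jstar K = lh_step M q (B1 K', inr (ss K')) by rewrite EK /= IH'.
have bB := run_basis nd IH'.
have KK : K'.+1 <= K by lia.
have KK' : K' <= K by lia.
have gB : inr (ss K') \notin B1 K' by rewrite inE /= inS_s //; lia.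
have eB : inl (ss K) \in B1 K' by rewrite inE /= HK inS_s //; lia.
rewrite (stepE nd bB gB eB) ?rr_inl ?ssS -?EK //=; congr (Some (_, _)).
apply/setP => -[i|j]; rewrite !inE /= ?HK.
  case: (s_dec i) => [[b bK ->]|H].
    by rewrite !inS_s ?eqLL ?eqRR ?eq_s //; lia.
  by rewrite !inS_out // ?eqLL eq_sym (negbTE (H _ K0)).
case: (s_dec j) => [[b bK ->]|H].
  by rewrite !inS_s ?eqLL ?eqRR ?eq_s //; lia.
by rewrite !inS_out // ?eqRR eq_sym (negbTE (H K' ltac:(lia))).
Qed.

Variable c' : nat.
Hypothesis HcK : c'.+1 < K.
Hypothesis HsK : ss K = ss c'.+1.

Definition B2 d : {set elt n} :=
  [set e | match e with
           | inl i => ~~ inS 1 K i || inS d.+1 c'.+1 i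
           | inr j => inS 0 d j || inS c'.+1 K j end].

Lemma phase2 m : m <= c' ->
  lh_run M q jstar (K + m) = Some (B2 (c' - m), inl (ss (c' - m))).
Proof.
elim: m => [|m IH] mc.
  have [K' EK] : exists K', K = K'.+1 by exists K.-1; lia.
  have IH' := phase1 (ltac:(lia) : K' < K).
  rewrite addn0 subn0.
  have -> : lh_run M q jstar K = lh_step M q (B1 K', inr (ss K')) by rewrite EK /= IH'.
  have bB := run_basis nd IH'.
  have KK : K'.+1 <= K by lia.
  have KK' : K' <= K by lia.
  have KK2 : c'.+1 <= K by lia.
  have KK3 : c' <= K by lia.
  have gB : inr (ss K') \notin B1 K' by rewrite inE /= inS_s //; lia.
  have eB : inr (ss c') \in B1 K' by rewrite inE /= inS_s //; lia.
  have ree : rr M q (inr (ss c')) = rr M q (inr (ss K')) by rewrite !ssS -EK HsK.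
  rewrite (stepE nd bB gB eB ree) /=; congr (Some (_, _)).
  apply/setP => -[i|j]; rewrite !inE /=.
    case: (s_dec i) => [[b bK ->]|H].
      by rewrite !inS_s ?eqLL ?eqRR ?eqLR ?eqRL ?eq_s //; lia.
    by rewrite !inS_out // ?eqLR.
  case: (s_dec j) => [[b bK ->]|H].
    by rewrite !inS_s ?eqLL ?eqRR ?eq_s //; lia.
  by rewrite !inS_out // ?eqRR ?andbF eq_sym (negbTE (H K' ltac:(lia))).
have IH' := IH (ltnW mc).
have [d' Ed] : exists d', c' - m = d'.+1 by exists (c' - m.+1); lia.
have -> : c' - m.+1 = d' by lia.
rewrite Ed in IH'.
rewrite addnS.
have -> : lh_run M q jstar (K + m).+1 = lh_step M q (B2 d'.+1, inl (ss d'.+1)) by rewrite /= IH'.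
have bB := run_basis nd IH'.
have KK : d'.+2 <= K by lia.
have KK1 : d'.+1 <= K by lia.
have KK0 : d' <= K by lia.
have KK2 : c'.+1 <= K by lia.
have gB : inl (ss d'.+1) \notin B2 d'.+1 by rewrite inE /= !inS_s //; lia.
have eB : inr (ss d') \in B2 d'.+1 by rewrite inE /= !inS_s //; lia.
have ree : rr M q (inr (ss d')) = rr M q (inl (ss d'.+1)) by rewrite rr_inl.
rewrite (stepE nd bB gB eB ree) /=; congr (Some (_, _)).
apply/setP => -[i|j]; rewrite !inE /=.
  case: (s_dec i) => [[b bK ->]|H].
    by rewrite !inS_s ?eqLL ?eqRR ?eqLR ?eqRL ?eq_s //; lia.
  by rewrite !inS_out // ?eqLL eq_sym (negbTE (H d'.+1 KK)).
case: (s_dec j) => [[b bK ->]|H].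
  by rewrite !inS_s ?eqLL ?eqRR ?eqLR ?eqRL ?eq_s //; lia.
by rewrite !inS_out // ?eqRL ?orbF ?andbF.
Qed.

Lemma nfl2 d : 0 < d <= c' -> ~~ fully_labeled (B2 d).
Proof.
move=> dc; apply/forallPn; exists (ss d); rewrite !inE /= !inS_s //; lia.
Qed.

Lemma fl2 : fully_labeled (B2 0).
Proof.
apply/forallP => i; rewrite !inE /=.
case: (s_dec i) => [[b bK ->]|H].
  by rewrite !inS_s //; lia.
have KK : K <= K by [].
have -> : inS 1 K i = false by apply: inS_out.
done.
Qed.

Lemma red2 : inr (ss c'.+1) \in B2 0.
Proof. by rewrite inE /= !inS_s //; lia. Qed.

End Run.

Unset Implicit Arguments.
Unset Strict Implicit.

Theorem theorem1p3 (R : realFieldType) (n : nat) (M : 'M[option R]_n)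
  (q : 'I_n -> R) (jstar : 'I_n) :
  no_minf_column M -> tnecp_nondegenerate M q ->
  exists (k : nat) (B : {set elt n}) (g : elt n),
    [/\ (0 < k <= (2 * n).-1)%N,
        lh_run M q jstar k = Some (B, g),
        fully_labeled B,
        (forall t : nat, (0 < t < k)%N ->
           exists s, lh_run M q jstar t = Some s /\ ~~ fully_labeled s.1) &
        tnecp_solution M q (fun i => basic_point M q B (inl i))
                           (fun i => basic_point M q B (inr i))].
Proof.
move=> _ nd.
pose s := ss M q jstar.
pose P t := (0 < t)%N && has (fun b => s b == s t) (iota 0 t).
have [t0 t0n Pt0] : exists2 t, (t <= n)%N & P t.
  case: (boolP [exists t : 'I_n.+1, P t]) => [/existsP [t Pt]|/existsPn none].
    by exists t => //; rewrite -ltnS.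
  exfalso.
  have inj : {in iota 0 n.+1 &, injective s}.
    move=> a b; rewrite !mem_iota /= !add0n => ha hb E.
    case: (ltngtP a b) => [lt|lt|//]; exfalso.
      have := none (Ordinal hb); rewrite /P /=.
      have -> : (0 < b)%N by lia.
      by have -> // : has (fun b0 => s b0 == s b) (iota 0 b); apply/hasP; exists a;
        [rewrite mem_iota; lia | apply/eqP].
    have := none (Ordinal ha); rewrite /P /=.
    have -> : (0 < a)%N by lia.
    by have -> // : has (fun b0 => s b0 == s a) (iota 0 a); apply/hasP; exists b;
      [rewrite mem_iota; lia | apply/eqP].
  have U : uniq (map s (iota 0 n.+1)) by rewrite (map_inj_in_uniq inj) iota_uniq.
  have := max_card (mem (map s (iota 0 n.+1))).
  by rewrite (card_uniqP U) size_map size_iota card_ord ltnn.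
have exP : exists t, P t by exists t0.
case: (ex_minnP exP) => K PK Kmin.
have Kn : (K <= n)%N := leq_trans (Kmin _ Pt0) t0n.
move/andP: PK => [K0 /hasP [c]]; rewrite mem_iota add0n => /andP [_ cK] /eqP HsK.
have sinj : forall a b, (a < K)%N -> (b < K)%N -> ss M q jstar a = ss M q jstar b -> a = b.
  move=> a b aK bK E; case: (ltngtP a b) => [lt|lt|//]; exfalso.
    have Pb : P b.
      apply/andP; split; first by lia.
      by apply/hasP; exists a; [rewrite mem_iota; lia | apply/eqP].
    by have := Kmin b Pb; lia.
  have Pa : P a.
    apply/andP; split; first by lia.
    by apply/hasP; exists b; [rewrite mem_iota; lia | apply/eqP].
  by have := Kmin a Pa; lia.
have n0 : (0 < n)%N by have := ltn_ord jstar; lia.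
case: c cK HsK => [|c'] cK HsK.
  have run := phase1_last nd sinj K0 (esym HsK).
  exists K, (Bf0 M q jstar K), (inr (ss M q jstar K)); split.
  - lia.
  - exact: run.
  - exact: fl_Bf0.
  - move=> t /andP [t0' tK]; exists (B1 M q jstar t, inr (ss M q jstar t)); split.
      exact: (phase1 nd sinj tK).
    by apply: (nfl1 sinj); lia.
  apply: (tnecp_ok nd (run_basis nd run) (fl_Bf0 _ _ _ _)).
  by exists (ss M q jstar 0); rewrite inE /=; apply/inSP; exists 0.
have run := phase2 nd sinj cK (esym HsK) (leqnn c').
rewrite subnn in run.
exists (K + c')%N, (B2 M q jstar K c' 0), (inl (ss M q jstar 0)); split.
- lia.
- exact: run.
- exact: (fl2 sinj cK).
- move=> t /andP [t0' tK].
  case: (ltnP t K) => tK'.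
    exists (B1 M q jstar t, inr (ss M q jstar t)); split.
      exact: (phase1 nd sinj tK').
    by apply: (nfl1 sinj); lia.
  have -> : t = (K + (t - K))%N by lia.
  exists (B2 M q jstar K c' (c' - (t - K)), inl (ss M q jstar (c' - (t - K)))); split.
    by apply: (phase2 nd sinj cK (esym HsK)); lia.
  by apply: (nfl2 sinj cK); lia.
apply: (tnecp_ok nd (run_basis nd run) (fl2 sinj cK)).
by exists (ss M q jstar c'.+1); exact: (red2 sinj cK).
Qed.
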